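(* In the setting below, $$\left|\mathbb{E}\left(\sum_{i=1}^{mn}(1-w_i)\left(z_i-\frac1n\right)\right)\right|\le 2\sqrt{6\sum_{i=1}^{mn}\mathbb{E}(z_i)+8m}.$$
   Context: Setting: $m,n$ are positive integers with $n\ge 1200\sqrt m$. A deck of $mn$ cards with $m$ copies of each label $1,\dots,n$ is shuffled uniformly at random. A fixed guessing strategy is used: in round $t=1,\dots,mn$ the Guesser guesses $g_t\in\{1,\dots,n\}$, a function (possibly randomized independently of the deck) of $y_1,\dots,y_{t-1}$, where $y_t\in\{0,1\}$ is the indicator that the $t$-th card has label $g_t$. For a vector $v$, $v_{\le t}:=(v_1,\dots,v_t)$. For $1\le k\le n$, $1\le t\le mn+1$: $a(k,t):=|\{1\le i<t: g_i=k\}|$. Let $Y:=\lfloor \tfrac16\sqrt m\, n\rfloor$. Let $(z_1,\dots,z_{mn})\in\{0,1\}^{mn}$ be a random vector (on an extension of the probability space), with $c(k,t):=|\{1\le i<t: g_i=k,\ z_i=1\}|$, satisfying almost surely: (a) for all $k,t$: $m-\max\{mn-a(k,t)-Y,0\}\le c(k,t)\le m$; (b) for each $t$, conditioned on $g_{\le t},y_{\le t}$, the coordinates of $z_{\le t}$ are mutually independent and independent from $g_{\le mn},y_{\le mn}$; (c) for each $t$, if $a(g_t,t)<mn-Y$ then $\mathbb{E}(z_t\mid g_{\le t},z_{\le t-1})=\frac{m-c(g_t,t)}{mn-a(g_t,t)-Y}$; (d) for each $t$, if $\mathbb{E}(y_t\mid g_{\le t},y_{\le t-1})\le\mathbb{E}(z_t\mid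 g_{\le t},z_{\le t-1})$ then $y_t\le z_t$. (Such a vector exists.) For $1\le t\le mn$, $w_t\in\{0,1\}$ is the indicator of the event $a(g_t,t)\le \frac12 mn$. *)

(* Defs.v *)
From mathcomp Require Import all_boot all_order all_algebra.
From mathcomp Require Import reals.
Set Implicit Arguments. Unset Strict Implicit. Unset Printing Implicit Defensive.
Import Order.TTheory GRing.Theory Num.Theory.
Local Open Scope ring_scope.

Definition is_pmf (R : realType) (Omega : finType) (P : Omega -> R) : Prop :=
  (forall w, 0 <= P w) /\ \sum_(w : Omega) P w = 1.

Definition Pr (R : realType) (Omega : finType) (P : Omega -> R) (A : pred Omega) : R :=
  \sum_(w : Omega | A w) P w.

Definition Exp (R : realType) (Omega : finType) (P : Omega -> R) (X : Omega -> R) : R :=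
  \sum_(w : Omega) P w * X w.

(* conditional expectation E(X | V), evaluated at the outcome w0
   (meaningful, and only used, when P w0 > 0, i.e. almost surely) *)
Definition condE (R : realType) (Omega : finType) (P : Omega -> R)
    (X : Omega -> R) (T : eqType) (V : Omega -> T) (w0 : Omega) : R :=
  (\sum_(w : Omega | V w == V w0) P w * X w) / (\sum_(w : Omega | V w == V w0) P w).

Definition condPr (R : realType) (Omega : finType) (P : Omega -> R)
    (A : pred Omega) (T : eqType) (V : Omega -> T) (w0 : Omega) : R :=
  Pr P (fun w => A w && (V w == V w0)) / Pr P (fun w => V w == V w0).

(* v_{<= t} (paper's 1-indexed round t+1 <-> our 0-indexed round t) *)
Definition pre_le (Omega : finType) (N : nat) (T : Type) (f : 'I_N -> Omega -> T)
    (t : nat) (w : Omega) : {ffun 'I_N -> option T} :=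
  [ffun i : 'I_N => if (i <= t)%N then Some (f i w) else None].

Definition pre_lt (Omega : finType) (N : nat) (T : Type) (f : 'I_N -> Omega -> T)
    (t : nat) (w : Omega) : {ffun 'I_N -> option T} :=
  [ffun i : 'I_N => if (i < t)%N then Some (f i w) else None].

Definition cnt_a (Omega : finType) (N n : nat) (g : 'I_N -> Omega -> 'I_n)
    (k : 'I_n) (t : nat) (w : Omega) : nat :=
  #|[set i : 'I_N | (i < t)%N && (g i w == k)]|.

Definition cnt_c (Omega : finType) (N n : nat) (g : 'I_N -> Omega -> 'I_n)
    (z : 'I_N -> Omega -> bool) (k : 'I_n) (t : nat) (w : Omega) : nat :=
  #|[set i : 'I_N | [&& (i < t)%N, g i w == k & z i w]]|.

Definition Ybound (R : realType) (m n : nat) : nat :=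
  `|Num.floor (Num.sqrt (m%:R : R) * n%:R / 6)|%N.

Definition valid_deck (m n : nat) (d : {ffun 'I_(m * n) -> 'I_n}) : bool :=
  [forall k : 'I_n, #|[set i | d i == k]| == m].

Definition wind (R : realType) (Omega : finType) (m n : nat)
    (g : 'I_(m * n) -> Omega -> 'I_n) (t : 'I_(m * n)) (w : Omega) : R :=
  if ((cnt_a g (g t w) t w)%:R <= (m * n)%:R / 2 :> R) then 1 else 0.

(* Main.v *)
Require Import Defs.
From mathcomp Require Import all_boot all_order all_algebra.
From mathcomp Require Import reals.
From mathcomp Require Import ring lra zify.
Set Implicit Arguments. Unset Strict Implicit. Unset Printing Implicit Defensive.
Import Order.TTheory GRing.Theory Num.Theory.
Local Open Scope ring_scope.

Lemma Exp_le (R : realType) (Omega : finType) (P : Omega -> R) (X Y : Omega -> R) :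
  (forall w, 0 <= P w) -> (forall w, 0 < P w -> X w <= Y w) -> Exp P X <= Exp P Y.
Proof.
move=> P0 H; rewrite /Exp; apply: ler_sum => w _.
have := P0 w; rewrite le0r => /orP [/eqP ->|Pw]; first by rewrite !mul0r.
by apply: ler_wpM2l; [exact: ltW | exact: H].
Qed.

Lemma ExpD (R : realType) (Omega : finType) (P : Omega -> R) (X Y : Omega -> R) :
  Exp P (fun w => X w + Y w) = Exp P X + Exp P Y.
Proof. by rewrite /Exp -big_split /=; apply: eq_bigr => w _; rewrite mulrDr. Qed.

Lemma ExpZ (R : realType) (Omega : finType) (P : Omega -> R) (c : R) (X : Omega -> R) :
  Exp P (fun w => c * X w) = c * Exp P X.
Proof. by rewrite /Exp mulr_sumr; apply: eq_bigr => w _; rewrite mulrCA. Qed.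

Lemma ExpC (R : realType) (Omega : finType) (P : Omega -> R) (c : R) :
  is_pmf P -> Exp P (fun w => c) = c.
Proof. by case=> _ H1; rewrite /Exp -mulr_suml H1 mul1r. Qed.

Lemma Exp_ext (R : realType) (Omega : finType) (P : Omega -> R) (X Y : Omega -> R) :
  (forall w, X w = Y w) -> Exp P X = Exp P Y.
Proof. by move=> H; apply: eq_bigr => w _; rewrite H. Qed.

Lemma CS (R : realType) (Omega : finType) (P : Omega -> R) (X : Omega -> R) :
  is_pmf P -> (Exp P X) ^+ 2 <= Exp P (fun w => X w ^+ 2).
Proof.
move=> HP; set mu := Exp P X.
have : 0 <= Exp P (fun w => (X w - mu) ^+ 2).
  by apply: sumr_ge0 => w _; rewrite mulr_ge0 ?sqr_ge0 //; case: HP.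
have -> : Exp P (fun w => (X w - mu) ^+ 2) =
   Exp P (fun w => X w ^+ 2) + (-2 * mu) * Exp P X + Exp P (fun w => mu ^+ 2).
  rewrite -ExpZ -!ExpD; apply: Exp_ext => w; ring.
by rewrite ExpC // -/mu; lra.
Qed.

Lemma tower (R : realType) (Omega : finType) (P : Omega -> R) (T : eqType)
  (V : Omega -> T) (f X : Omega -> R) :
  (forall w, 0 <= P w) -> (forall w w', V w = V w' -> f w = f w') ->
  Exp P (fun w => f w * X w) = Exp P (fun w => f w * condE P X V w).
Proof.
move=> P0 Hf; rewrite /Exp /condE.
set Sd := fun w => \sum_(w' | V w' == V w) P w'.
have -> : \sum_w P w * (f w * ((\sum_(w' | V w' == V w) P w' * X w') / Sd w)) =
   \sum_w \sum_(w' | V w' == V w) P w * f w / Sd w * (P w' * X w').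
  apply: eq_bigr => w _; rewrite -mulr_sumr; rewrite -/(Sd w); ring.
rewrite (exchange_big_dep xpredT) //=; apply: eq_bigr => w' _.
have E : forall w, V w' == V w -> P w * f w / Sd w * (P w' * X w') =
    P w * (f w' / Sd w' * (P w' * X w')).
  move=> w /eqP e; rewrite /Sd e (Hf w' w e) !mulrA //.
rewrite (eq_bigr _ E) -mulr_suml.
have -> : \sum_(w | true && (V w' == V w)) P w = Sd w'.
  by apply: eq_bigl => w; rewrite /= eq_sym.
have : 0 <= P w' <= Sd w'.
  rewrite P0 /=. rewrite /Sd (bigD1 w') //= lerDl; apply: sumr_ge0 => *; exact: P0.
case/andP=> _ HS; have := P0 w'; rewrite le0r => /orP [/eqP ->|Pw].
  by rewrite !(mul0r, mulr0).
have Sd0 : Sd w' != 0 by apply/negP => /eqP e; move: HS; rewrite e; lra.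
move: Sd0; set S := Sd w' => Sd0.
have -> : S * (f w' / S * (P w' * X w')) = (S / S) * (f w' * (P w' * X w')) by ring.
by rewrite mulfV // mul1r; ring.
Qed.


Lemma condE_ge0 (R : realType) (Omega : finType) (P : Omega -> R) (T : eqType)
  (V : Omega -> T) (X : Omega -> R) w0 :
  (forall w, 0 <= P w) -> (forall w, 0 <= X w) -> 0 <= condE P X V w0.
Proof.
move=> P0 X0; rewrite /condE divr_ge0 //; apply: sumr_ge0 => w _;
  rewrite ?mulr_ge0 //.
Qed.

Lemma card_sumn (N : nat) (Q : pred 'I_N) : #|[set i | Q i]| = (\sum_i (Q i : nat))%N.
Proof. by rewrite -sum1dep_card big_mkcond /=; apply: eq_bigr => i _; case: (Q i). Qed.

Lemma card_succ (N : nat) (Q : pred 'I_N) (t : 'I_N) :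
  #|[set i : 'I_N | (i < t.+1)%N && Q i]| = (#|[set i : 'I_N | (i < t)%N && Q i]| + Q t)%N.
Proof.
rewrite !card_sumn (bigD1 t) //= [X in _ = (X + _)%N](bigD1 t) //= ltnSn ltnn /= addnC.
congr (_ + _)%N; apply: eq_bigr => i ne; rewrite ltnS leq_eqVlt.
suff -> : (nat_of_ord i == t) = false by [].
by apply/negbTE; move: ne; apply: contra => /eqP e; apply/eqP/val_inj.
Qed.

Lemma sum_succ (R : realType) (N : nat) (F : 'I_N -> R) (t : 'I_N) :
  \sum_(i : 'I_N | (i < t.+1)%N) F i = \sum_(i : 'I_N | (i < t)%N) F i + F t.
Proof.
rewrite (bigD1 t) //= addrC; congr (_ + _); apply: eq_bigl => i.
rewrite ltnS leq_eqVlt; case: (ltngtP i t) => //= e.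
  by apply/negP => /eqP ei; move: e; rewrite ei ltnn.
have -> : i = t by apply: val_inj.
by rewrite eqxx.
Qed.

Lemma card0_lt (N : nat) (Q : pred 'I_N) : #|[set i : 'I_N | (i < 0)%N && Q i]| = 0%N.
Proof. by rewrite card_sumn big1. Qed.

Lemma card_le (N : nat) (Q : pred 'I_N) : (#|[set i : 'I_N | Q i]| <= N)%N.
Proof. by apply: leq_trans (max_card _) _; rewrite card_ord. Qed.

Lemma sum_one (R : realType) (n : nat) (F G : 'I_n -> R) (l : 'I_n) :
  (forall k, k != l -> F k = G k) -> \sum_k F k = \sum_k G k + (F l - G l).
Proof.
move=> H; rewrite (bigD1 l) // [X in _ = X + _](bigD1 l) //=.
rewrite (eq_bigr _ (fun k h => H k h)); ring.
Qed.

Lemma alg1 (R : realType) (nn p v Y D Nr : R) :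
  1 <= D -> Nr <= 3 * D -> 0 < Nr -> 0 <= Y ->
  nn * p = 1 + (Y - v) / D ->
  p * ((v + nn - 1) ^+ 2 - v ^+ 2) + (1 - p) * ((v - 1) ^+ 2 - v ^+ 2)
    <= 3 * Y ^+ 2 / Nr + nn ^+ 2 * p.
Proof.
move=> D1 DN N0 Y0 hq.
have -> : p * ((v + nn - 1) ^+ 2 - v ^+ 2) + (1 - p) * ((v - 1) ^+ 2 - v ^+ 2) =
  -2 * v + 1 + 2 * (nn * p) * (v - 1) + nn ^+ 2 * p by ring.
rewrite hq lerD2r.
have D0 : 0 < D by lra.
set r := D^-1.
have r0 : 0 < r by rewrite invr_gt0.
have rD : r * D = 1 by rewrite mulVf // gt_eqF.
have r1 : r <= 1 by nra.
have hY : 3 * Y ^+ 2 / Nr >= Y ^+ 2 * r.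
  rewrite ler_pdivlMr //.
  have : Y ^+ 2 * r * Nr <= Y ^+ 2 * r * (3 * D).
    by apply: ler_wpM2l => //; rewrite mulr_ge0 ?sqr_ge0 ?ltW.
  by rewrite -[Y ^+ 2 * r * (3 * D)]/(Y ^+ 2 * r * (3 * D)) => h; apply: le_trans h _;
     rewrite [3 * D]mulrC mulrA -[Y ^+ 2 * r * D]mulrA rD mulr1; lra.
have sq : 0 <= r * (Y + 1 - 2 * v) ^+ 2 by rewrite mulr_ge0 ?sqr_ge0 ?ltW.
have : -2 * v + 1 + 2 * (1 + (Y - v) * r) * (v - 1) <= Y ^+ 2 * r.
  nra.
lra.
Qed.

Lemma alg2 (R : realType) (nn p e D : R) :
  1 <= D -> nn * p = 1 - e / D ->
  p * ((e + nn - 1) ^+ 2 - e ^+ 2) + (1 - p) * ((e - 1) ^+ 2 - e ^+ 2)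
    <= 0 + nn ^+ 2 * p.
Proof.
move=> D1 hq.
have -> : p * ((e + nn - 1) ^+ 2 - e ^+ 2) + (1 - p) * ((e - 1) ^+ 2 - e ^+ 2) =
  -2 * e + 1 + 2 * (nn * p) * (e - 1) + nn ^+ 2 * p by ring.
rewrite hq lerD2r.
have D0 : 0 < D by lra.
set r := D^-1.
have r0 : 0 < r by rewrite invr_gt0.
have rD : r * D = 1 by rewrite mulVf // gt_eqF.
have r1 : r <= 1 by nra.
have sq : 0 <= r * (2 * e - 1) ^+ 2 by rewrite mulr_ge0 ?sqr_ge0 ?ltW.
nra.
Qed.

Section Main.
Variables (R : realType) (m n : nat).
Hypotheses (Hm : (0 < m)%N) (Hn : (0 < n)%N).
Variables (Omega : finType) (P : Omega -> R).
Hypothesis HP : is_pmf P.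
Variables (g : 'I_(m * n) -> Omega -> 'I_n) (z : 'I_(m * n) -> Omega -> bool).

Local Notation N := (m * n)%N.
Local Notation Yn := (Ybound R m n).
Local Notation Y := ((Ybound R m n)%:R : R).

Hypothesis Ha : forall w, 0 < P w -> forall (k : 'I_n) (t : nat), (t <= m * n)%N ->
     (m%:R - Num.max ((m * n)%:R - (cnt_a g k t w)%:R - (Ybound R m n)%:R) 0
        <= (cnt_c g z k t w)%:R :> R)
     /\ (cnt_c g z k t w <= m)%N.
Hypothesis Hc : forall (t : 'I_(m * n)) w, 0 < P w ->
     (cnt_a g (g t w) t w)%:R < (m * n)%:R - (Ybound R m n)%:R :> R ->
     condE P (fun w' => (z t w')%:R) (fun w' => (pre_le g t w', pre_lt z t w')) w
     = ((m%:R - (cnt_c g z (g t w) t w)%:R)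
         / ((m * n)%:R - (cnt_a g (g t w) t w)%:R - (Ybound R m n)%:R)).

Definition Aa := (N./2).+1.
Definition ah (k : 'I_n) (t : nat) w :=
  #|[set i : 'I_N | (i < t)%N && ((g i w == k) && (cnt_a g k i w < Aa)%N)]|.
Definition ch (k : 'I_n) (t : nat) w :=
  #|[set i : 'I_N | (i < t)%N && [&& g i w == k, (cnt_a g k i w < Aa)%N & z i w]]|.

Lemma a_succ k (t : 'I_N) w : cnt_a g k t.+1 w = (cnt_a g k t w + (g t w == k))%N.
Proof. exact: card_succ. Qed.
Lemma c_succ k (t : 'I_N) w : cnt_c g z k t.+1 w = (cnt_c g z k t w + (g t w == k) * z t w)%N.
Proof. by rewrite /cnt_c card_succ; case: (g t w == k); case: (z t w). Qed.
Lemma ah_succ k (t : 'I_N) w : ah k t.+1 w = (ah k t w + ((g t w == k) && (cnt_a g k t w < Aa)%N))%N.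
Proof. exact: card_succ. Qed.
Lemma ch_succ k (t : 'I_N) w :
  ch k t.+1 w = (ch k t w + ((g t w == k) && (cnt_a g k t w < Aa)%N) * z t w)%N.
Proof. rewrite /ch card_succ; by case: (g t w == k); case: (_ < _)%N; case: (z t w). Qed.

Lemma inv_hat k w : forall t, (t <= N)%N ->
  ah k t w = minn (cnt_a g k t w) Aa /\
  ((cnt_a g k t w < Aa)%N -> ch k t w = cnt_c g z k t w).
Proof.
elim=> [|t IH] ht.
  by rewrite /ah /ch /cnt_a /cnt_c !card0_lt.
have htN : (t < N)%N by [].
have [IH1 IH2] := IH (ltnW ht).
pose t' := Ordinal htN.
move: (ah_succ k t' w) (ch_succ k t' w) (a_succ k t' w) (c_succ k t' w).
rewrite /= => -> -> -> ->; rewrite IH1.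
case: (g t' w == k) => /=; last first.
  by rewrite !addn0; split => // h; rewrite IH2.
case: (ltnP (cnt_a g k t w) Aa) => h /=.
  split; first by lia.
  by move=> h2; rewrite IH2 //; case: (z t' w).
split; first by lia.
by move=> h2; exfalso; lia.
Qed.


Lemma V_g (t : nat) w w' : (pre_le g t w, pre_lt z t w) = (pre_le g t w', pre_lt z t w') ->
  forall i : 'I_N, (i <= t)%N -> g i w = g i w'.
Proof. by case=> e1 _ i hi; move/ffunP: e1 => /(_ i); rewrite !ffunE hi; case. Qed.
Lemma V_z (t : nat) w w' : (pre_le g t w, pre_lt z t w) = (pre_le g t w', pre_lt z t w') ->
  forall i : 'I_N, (i < t)%N -> z i w = z i w'.
Proof. by case=> _ e1 i hi; move/ffunP: e1 => /(_ i); rewrite !ffunE hi; case. Qed.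

Lemma cnt_a_eq k s w w' : (forall i : 'I_N, (i < s)%N -> g i w = g i w') ->
  cnt_a g k s w = cnt_a g k s w'.
Proof. by move=> H; apply: eq_card => i; rewrite !inE; case: ltnP => //= hi; rewrite H. Qed.
Lemma cnt_c_eq k s w w' : (forall i : 'I_N, (i < s)%N -> g i w = g i w') ->
  (forall i : 'I_N, (i < s)%N -> z i w = z i w') ->
  cnt_c g z k s w = cnt_c g z k s w'.
Proof. by move=> H H'; apply: eq_card => i; rewrite !inE; case: ltnP => //= hi; rewrite H ?H'. Qed.
Lemma ah_eq k s w w' : (forall i : 'I_N, (i < s)%N -> g i w = g i w') ->
  ah k s w = ah k s w'.
Proof.
move=> H; apply: eq_card => i; rewrite !inE; case: ltnP => //= hi; rewrite H //.
rewrite (@cnt_a_eq k i w w') // => j hj; apply: H; exact: ltn_trans hj hi.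
Qed.
Lemma ch_eq k s w w' : (forall i : 'I_N, (i < s)%N -> g i w = g i w') ->
  (forall i : 'I_N, (i < s)%N -> z i w = z i w') ->
  ch k s w = ch k s w'.
Proof.
move=> H H'; apply: eq_card => i; rewrite !inE; case: ltnP => //= hi; rewrite H ?H' //.
rewrite (@cnt_a_eq k i w w') // => j hj; apply: H; exact: ltn_trans hj hi.
Qed.

Lemma meas (t : 'I_N) w w' : (pre_le g t w, pre_lt z t w) = (pre_le g t w', pre_lt z t w') ->
  g t w = g t w' /\ forall k, [/\ cnt_a g k t w = cnt_a g k t w', cnt_c g z k t w = cnt_c g z k t w',
     ah k t w = ah k t w' & ch k t w = ch k t w'].
Proof.
move=> e; have Hg := V_g e; have Hz := V_z e.
have Hg' : forall i : 'I_N, (i < t)%N -> g i w = g i w' by move=> i h; apply: Hg; exact: ltnW.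
split; first exact: Hg.
move=> k; split; [exact: cnt_a_eq | exact: cnt_c_eq | exact: ah_eq | exact: ch_eq].
Qed.

Definition ar k t w : R := (cnt_a g k t w)%:R.
Definition cr k t w : R := (cnt_c g z k t w)%:R.
Definition ev k t w : R := n%:R * cr k t w - ar k t w - Y.
Definition vh k t w : R := n%:R * (ch k t w)%:R - (ah k t w)%:R.
Definition eb k t w : R := if ar k t w < N%:R - Y then ev k t w else 0.
Definition Phi1 t w := \sum_k (vh k t w) ^+ 2.
Definition Psi t w := \sum_k (if (Aa <= cnt_a g k t w)%N then eb k t w ^+ 2 - (vh k t w - Y) ^+ 2 else 0).
Definition pz (t : 'I_N) w :=
  condE P (fun w' => (z t w')%:R) (fun w' => (pre_le g t w', pre_lt z t w')) w.

Lemma P0 w : 0 <= P w. Proof. by case: HP. Qed.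

Lemma step (t : 'I_N) (F F' b c : Omega -> R) (kap : R) :
 (forall w, 0 < P w -> F' w <= F w + (if z t w then b w else c w)) ->
 (forall w w', (pre_le g t w, pre_lt z t w) = (pre_le g t w', pre_lt z t w') -> b w = b w' /\ c w = c w') ->
 (forall w, 0 < P w -> pz t w * b w + (1 - pz t w) * c w <= kap + n%:R ^+ 2 * pz t w) ->
 Exp P F' <= Exp P F + kap + n%:R ^+ 2 * Exp P (fun w => (z t w)%:R).
Proof.
move=> H1 Hm' H3.
have E1 : Exp P F' <= Exp P (fun w => F w + (c w + (b w - c w) * (z t w)%:R)).
  apply: Exp_le => [|w Pw]; first exact: P0.
  by apply: le_trans (H1 w Pw) _; case: (z t w) => /=; rewrite ?mulr1 ?mulr0; lra.
apply: le_trans E1 _; rewrite ExpD ExpD -addrA lerD2l.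
rewrite (@tower _ _ P _ (fun w => (pre_le g t w, pre_lt z t w)) (fun w => b w - c w)
   (fun w => (z t w)%:R) P0); last by move=> w w' e; have [-> ->] := Hm' w w' e.
have -> : Exp P (fun w => (z t w)%:R) = Exp P (fun w => 1 * (z t w)%:R).
  by apply: Exp_ext => w; rewrite mul1r.
rewrite (@tower _ _ P _ (fun w => (pre_le g t w, pre_lt z t w)) (fun w => 1)
   (fun w => (z t w)%:R) P0) //.
rewrite -ExpD -(ExpC kap HP) -ExpZ -ExpD; apply: Exp_le => [|w Pw]; first exact: P0.
have := H3 w Pw; rewrite /pz mul1r; lra.
Qed.


Lemma Y_facts : 0 <= Y /\ 36 * Y ^+ 2 <= m%:R * n%:R ^+ 2 /\ 6 * Y <= N%:R.
Proof.
set x := Num.sqrt (m%:R : R) * n%:R / 6.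
have x0 : 0 <= x by rewrite /x !mulr_ge0 ?sqrtr_ge0 ?invr_ge0 ?ler0n.
have Yx : Y <= x.
  rewrite /Ybound -/x natr_absz ger0_norm ?floor_ge0 //; exact: floor_le.
have x2 : 36 * x ^+ 2 = m%:R * n%:R ^+ 2.
  by rewrite /x !exprMn sqr_sqrtr ?ler0n //; field.
have Y0 : 0 <= Y by [].
have m1 : 1 <= (m%:R : R) by rewrite ler1n.
have n0 : 0 <= (n%:R : R) by [].
have YY : 36 * Y ^+ 2 <= m%:R * n%:R ^+ 2 by rewrite -x2; nra.
split => //; split => //.
rewrite natrM -(ler_sqr (R:=R)) ?nnegrE ?mulr_ge0 //.
rewrite exprMn; have h : (m%:R : R) * n%:R ^+ 2 <= m%:R ^+ 2 * n%:R ^+ 2.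
  by rewrite ler_wpM2r ?sqr_ge0 // expr2; nra.
nra.
Qed.

Lemma HaR w k (t : nat) : 0 < P w -> (t <= N)%N ->
  m%:R - Num.max (N%:R - ar k t w - Y) 0 <= cr k t w /\ cr k t w <= m%:R.
Proof. by move=> Pw ht; have [h1 h2] := Ha Pw k ht; split => //; rewrite ler_nat. Qed.

Lemma pz_ge0 (t : 'I_N) w : 0 <= pz t w.
Proof. by apply: condE_ge0 => // w'; exact: P0. Qed.

Lemma N0 : (0 < N)%N. Proof. by rewrite muln_gt0 Hm Hn. Qed.
Lemma N0R : 0 < (N%:R : R). Proof. by rewrite ltr0n N0. Qed.

Lemma D1 k t w : ar k t w < N%:R - Y -> 1 <= N%:R - ar k t w - Y.
Proof.
rewrite /ar => h; have h' : (cnt_a g k t w + Yn < N)%N by rewrite -(ltr_nat R) natrD; lra.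
have : ((cnt_a g k t w + Yn).+1 <= N)%N by [].
by rewrite -(ler_nat R) -addn1 !natrD; lra.
Qed.

Lemma half_R a : (a < Aa)%N -> 2 * (a%:R : R) <= N%:R.
Proof.
rewrite /Aa ltnS geq_half_double -(ler_nat R) => h; apply: le_trans h.
by rewrite -muln2 natrM mulrC.
Qed.

Lemma vh_succ k (t : 'I_N) w : vh k t.+1 w = vh k t w +
  (if (g t w == k) && (cnt_a g k t w < Aa)%N then n%:R * (z t w)%:R - 1 else 0).
Proof.
rewrite /vh ah_succ ch_succ; case: (g t w == k); case: (_ < _)%N; case: (z t w) => /=;
  rewrite ?natrD ?natrM /=; ring.
Qed.

Lemma pz_val (t : 'I_N) w : 0 < P w -> ar (g t w) t w < N%:R - Y ->
  n%:R * pz t w = 1 - ev (g t w) t w / (N%:R - ar (g t w) t w - Y).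
Proof.
move=> Pw h; rewrite /pz Hc //.
have := D1 h; rewrite /ev /cr /ar => hD.
have hD0 : N%:R - (cnt_a g (g t w) t w)%:R - Y != 0 :> R by apply/eqP => e; rewrite e in hD; lra.
rewrite natrM; rewrite natrM in hD hD0 h.
by field.
Qed.

Lemma Phi1_step (t : 'I_N) : Exp P (Phi1 t.+1) <=
  Exp P (Phi1 t) + 3 * Y ^+ 2 / N%:R + n%:R ^+ 2 * Exp P (fun w => (z t w)%:R).
Proof.
have [Y0 [Y2 Y6]] := Y_facts.
apply: (@step t _ _ (fun w => if (cnt_a g (g t w) t w < Aa)%N then
     (vh (g t w) t w + n%:R - 1) ^+ 2 - vh (g t w) t w ^+ 2 else 0)
   (fun w => if (cnt_a g (g t w) t w < Aa)%N then
     (vh (g t w) t w - 1) ^+ 2 - vh (g t w) t w ^+ 2 else 0)).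
- move=> w _; rewrite /Phi1 (@sum_one _ _ _ (fun k => vh k t w ^+ 2) (g t w)) => [|k hk]; last first.
    rewrite vh_succ; have -> : (g t w == k) = false by apply/negbTE; rewrite eq_sym.
    by rewrite /= addr0.
  rewrite vh_succ eqxx /=; case: ifP => _; case: (z t w) => /=; rewrite ?mulr1 ?mulr0; lra.
- move=> w w' e; have [eg Hk] := meas e; rewrite -eg.
  by have [e1 e2 e3 e4] := Hk (g t w); rewrite /vh e1 e3 e4.
move=> w Pw; case: ifP => ha; last first.
  by rewrite !mulr0 addr0; apply: addr_ge0; [rewrite mulr_ge0 ?invr_ge0 ?mulr_ge0 ?sqr_ge0 |
     rewrite mulr_ge0 ?sqr_ge0 ?pz_ge0].
have [I1 I2] := inv_hat (g t w) w (ltnW (ltn_ord t)).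
have hah : ah (g t w) t w = cnt_a g (g t w) t w by rewrite I1; apply/minn_idPl; exact: ltnW.
have hv : vh (g t w) t w = ev (g t w) t w + Y by rewrite /vh hah I2 // /ev /cr /ar; ring.
have h2 := half_R ha.
have hlt : ar (g t w) t w < N%:R - Y by rewrite /ar; have := N0R; lra.
have hD := D1 hlt.
apply: (@alg1 _ _ _ _ _ (N%:R - ar (g t w) t w - Y)) => //.
- by rewrite /ar; lra.
- exact: N0R.
rewrite pz_val // hv.
have hD0 : N%:R - ar (g t w) t w - Y != 0 by apply/eqP => e; rewrite e in hD; lra.
have -> : Y - (ev (g t w) t w + Y) = - ev (g t w) t w by ring.
by rewrite mulNr.
Qed.

Lemma ar_succ k (t : 'I_N) w : ar k t.+1 w = ar k t w + (if g t w == k then 1 else 0).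
Proof. by rewrite /ar a_succ natrD; case: (g t w == k). Qed.
Lemma ev_succ k (t : 'I_N) w : ev k t.+1 w = ev k t w +
  (if g t w == k then n%:R * (z t w)%:R - 1 else 0).
Proof.
rewrite /ev /cr /ar a_succ c_succ !natrD; case: (g t w == k); case: (z t w) => /=;
  rewrite ?natrD ?natrM /=; ring.
Qed.

Lemma eb_le k t w : eb k t w ^+ 2 <= ev k t w ^+ 2.
Proof. by rewrite /eb; case: ifP => _ //; rewrite expr0n /= sqr_ge0. Qed.

Definition Tm k t w := if (Aa <= cnt_a g k t w)%N then eb k t w ^+ 2 - (vh k t w - Y) ^+ 2 else 0.

Lemma Psi_step (t : 'I_N) : Exp P (Psi t.+1) <=
  Exp P (Psi t) + 0 + n%:R ^+ 2 * Exp P (fun w => (z t w)%:R).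
Proof.
have [Y0 [Y2 Y6]] := Y_facts.
apply: (@step t _ _ (fun w => if (Aa <= cnt_a g (g t w) t w)%N && (ar (g t w) t w < N%:R - Y) then
     (ev (g t w) t w + n%:R - 1) ^+ 2 - ev (g t w) t w ^+ 2 else 0)
   (fun w => if (Aa <= cnt_a g (g t w) t w)%N && (ar (g t w) t w < N%:R - Y) then
     (ev (g t w) t w - 1) ^+ 2 - ev (g t w) t w ^+ 2 else 0)).
- move=> w Pw; rewrite /Psi (@sum_one _ _ _ (fun k => Tm k t w) (g t w)) -/(Tm _ _ _) => [|k hk]; last first.
    have hf : (g t w == k) = false by apply/negbTE; rewrite eq_sym.
    rewrite /Tm /eb a_succ ar_succ ev_succ vh_succ hf /= !addr0 addn0 //.
  set l := g t w.
  have [I1 I2] := inv_hat l w (ltnW (ltn_ord t)).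
  have hA := a_succ l t w; have hAr := ar_succ l t w; have hE := ev_succ l t w;
  have hV := vh_succ l t w; rewrite -/l eqxx /= in hA hAr hE hV.
  have hE' := eb_le l t.+1 w.
  rewrite /Tm hA.
  case: (ltnP (cnt_a g l t w) Aa) => ha.
    case: (leqP Aa (cnt_a g l t w + 1)) => ha2; last by rewrite subrr; case: (z t w).
    have hah : ah l t w = cnt_a g l t w by rewrite I1; apply/minn_idPl; exact: ltnW.
    have hv : vh l t w = ev l t w + Y by rewrite /vh hah I2 // /ev /cr /ar; ring.
    rewrite hV ha hv hE in hE' *.
    rewrite /=; have -> : ev l t w + Y + (n%:R * (z t w)%:R - 1) - Y = ev l t w + (n%:R * (z t w)%:R - 1) by ring.
    by move: hE'; case: (z t w) => /= hE'; lra.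
  have ha2 : (Aa <= cnt_a g l t w + 1)%N by apply: leq_trans ha (leq_addr _ _).
  rewrite ha2 /= hV ifF ?addr0; last by rewrite ltnNge ha.
  rewrite /eb hAr hE.
  case: (boolP (ar l t w < N%:R - Y)) => hlt.
    case: ifP => _; case: (z t w) => /=;
      rewrite ?mulr1 ?mulr0 ?add0r ?addrA ?expr0n /=;
      (have := sqr_ge0 (ev l t w + n%:R - 1); have := sqr_ge0 (ev l t w - 1)); lra.
  rewrite /= ifF; first by case: (z t w) => /=; rewrite expr0n /=; lra.
  by apply/negbTE; move: hlt; apply: contra => h; lra.
- move=> w w' e; have [eg Hk] := meas e; rewrite -eg.
  by have [e1 e2 e3 e4] := Hk (g t w); rewrite /ev /ar /cr e1 e2.
move=> w Pw; case: ifP => /andP; last first.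
  by move=> _; rewrite !mulr0 addr0 add0r mulr_ge0 ?sqr_ge0 ?pz_ge0.
case=> ha hlt.
have hD := D1 hlt.
by apply: (@alg2 _ _ _ _ (N%:R - ar (g t w) t w - Y)) => //; rewrite pz_val.
Qed.

Lemma pot_bound (F : nat -> Omega -> R) (kap : R) :
  Exp P (F 0%N) <= 0 ->
  (forall t : 'I_N, Exp P (F t.+1) <= Exp P (F t) + kap + n%:R ^+ 2 * Exp P (fun w => (z t w)%:R)) ->
  forall t, (t <= N)%N -> Exp P (F t) <=
    t%:R * kap + n%:R ^+ 2 * \sum_(i : 'I_N | (i < t)%N) Exp P (fun w => (z i w)%:R).
Proof.
move=> H0 Hs; elim=> [|t IH] ht.
  by rewrite big_pred0 // mul0r mulr0 addr0.
have htN : (t < N)%N by [].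
have := Hs (Ordinal htN); rewrite /= => h; apply: le_trans h _.
have := IH (ltnW ht); move: (sum_succ (fun i : 'I_N => Exp P (fun w => (z i w)%:R)) (Ordinal htN)).
rewrite /= => -> h; have -> : (t.+1%:R : R) = t%:R + 1 by rewrite -addn1 natrD.
lra.
Qed.

Lemma vh0 k w : vh k 0 w = 0.
Proof. by rewrite /vh /ah /ch !card0_lt mulr0 subrr. Qed.

Lemma Phi1_bound : Exp P (Phi1 N) <= 3 * Y ^+ 2 + n%:R ^+ 2 * \sum_i Exp P (fun w => (z i w)%:R).
Proof.
have := @pot_bound Phi1 (3 * Y ^+ 2 / N%:R) _ Phi1_step N (leqnn _).
have -> : \sum_(i : 'I_N | (i < N)%N) Exp P (fun w => (z i w)%:R) = \sum_i Exp P (fun w => (z i w)%:R).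
  by apply: eq_bigl => i; rewrite ltn_ord.
have -> : (N%:R : R) * (3 * Y ^+ 2 / N%:R) = 3 * Y ^+ 2.
  have hN : (N%:R : R) != 0 by rewrite gt_eqF // N0R. by field; rewrite !pnatr_eq0 -!lt0n Hm Hn.
apply; rewrite /Exp big1 // => w _; rewrite /Phi1 big1 ?mulr0 // => k _; by rewrite vh0 expr0n.
Qed.

Lemma Psi_bound : Exp P (Psi N) <= n%:R ^+ 2 * \sum_i Exp P (fun w => (z i w)%:R).
Proof.
have := @pot_bound Psi 0 _ Psi_step N (leqnn _).
have -> : \sum_(i : 'I_N | (i < N)%N) Exp P (fun w => (z i w)%:R) = \sum_i Exp P (fun w => (z i w)%:R).
  by apply: eq_bigl => i; rewrite ltn_ord.
rewrite mulr0 add0r; apply; rewrite /Exp big1 // => w _; rewrite /Psi big1 ?mulr0 // => k _.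
by rewrite /cnt_a card0_lt.
Qed.

Lemma wind_eq (t : 'I_N) w : wind R g t w = if (cnt_a g (g t w) t w < Aa)%N then 1 else 0.
Proof.
rewrite /wind; congr (if _ then _ else _).
by rewrite /Aa ltnS geq_half_double -(ler_nat R) ler_pdivlMr // -muln2 !natrM.
Qed.

Lemma Q_ident w : forall t, (t <= N)%N ->
  n%:R * \sum_(i : 'I_N | (i < t)%N) (1 - wind R g i w) * ((z i w)%:R - n%:R^-1) =
  \sum_k (n%:R * ((cnt_c g z k t w)%:R - (ch k t w)%:R) - ((cnt_a g k t w)%:R - (ah k t w)%:R)).
Proof.
elim=> [|t IH] ht.
  rewrite big_pred0 // mulr0 big1 // => k _.
  by rewrite /cnt_c /ch /cnt_a /ah !card0_lt subrr mulr0 subrr.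
have htN : (t < N)%N by [].
set t' := Ordinal htN.
move: (sum_succ (fun i : 'I_N => (1 - wind R g i w) * ((z i w)%:R - n%:R^-1)) t').
rewrite /= => ->; rewrite mulrDr IH ?(ltnW ht) //.
pose F := fun k : 'I_n => n%:R * ((cnt_c g z k t w)%:R - (ch k t w)%:R) -
   ((cnt_a g k t w)%:R - (ah k t w)%:R) : R.
rewrite (@sum_one _ _ (fun k => n%:R * ((cnt_c g z k t.+1 w)%:R - (ch k t.+1 w)%:R) -
   ((cnt_a g k t.+1 w)%:R - (ah k t.+1 w)%:R)) F (g t' w)) => [|k hk]; last first.
  have hf : (g t' w == k) = false by apply/negbTE; rewrite eq_sym.
  move: (a_succ k t' w) (c_succ k t' w) (ah_succ k t' w) (ch_succ k t' w).
  by rewrite /F /= hf /= !addn0 => -> -> -> ->.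
congr (_ + _); rewrite /F.
move: (a_succ (g t' w) t' w) (c_succ (g t' w) t' w) (ah_succ (g t' w) t' w) (ch_succ (g t' w) t' w).
rewrite /= eqxx /= => -> -> -> ->.
rewrite wind_eq; have nz : (n%:R : R) != 0 by rewrite pnatr_eq0 -lt0n.
case: (_ < _)%N; case: (z t' w) => /=; rewrite !natrD ?addn0 ?addn1 ?natrD /=; by field.
Qed.

Lemma one_label w k k' : k != k' -> (Aa <= cnt_a g k N w)%N -> (Aa <= cnt_a g k' N w)%N -> False.
Proof.
move=> kk h1 h2.
set A := [set i : 'I_N | (i < N)%N && (g i w == k)].
set B := [set i : 'I_N | (i < N)%N && (g i w == k')].
have hI : A :&: B = set0.
  apply/setP => i; rewrite !inE; apply/negbTE; apply/negP => /andP [/andP [_ /eqP e1] /andP [_ /eqP e2]].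
  by move: kk; rewrite -e1 -e2 eqxx.
have hU : (#|A :|: B| <= N)%N by apply: leq_trans (max_card _) _; rewrite card_ord.
have := cardsUI A B; rewrite hI cards0 addn0 => e.
have hs : (#|A| + #|B| <= N)%N by rewrite -e.
have := odd_double_half N; rewrite /Aa in h1 h2.
move: hs; rewrite /A /B -/(cnt_a g k N w) -/(cnt_a g k' N w).
have := leq_b1 (odd N); lia.
Qed.

Lemma ev_end w k : 0 < P w -> ev k N w ^+ 2 <= eb k N w ^+ 2 + Y ^+ 2.
Proof.
move=> Pw; rewrite /eb; case: ifP => h; first by rewrite lerDl sqr_ge0.
have [h1 h2] := HaR k Pw (leqnn N).
have aN : ar k N w <= N%:R by rewrite /ar ler_nat card_le.
move/negbT: h; rewrite -leNgt => h.
rewrite max_r in h1; last by lra.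
have Y0 := (Y_facts).1.
have hc : cr k N w = m%:R by lra.
rewrite /ev hc expr0n add0r.
have he : n%:R * m%:R - ar k N w - Y = N%:R - ar k N w - Y by rewrite natrM mulrC.
rewrite he; have hx1 : 0 <= Y + (N%:R - ar k N w - Y) by lra.
have hx2 : 0 <= Y - (N%:R - ar k N w - Y) by lra.
have := mulr_ge0 hx2 hx1; nra.
Qed.

Definition Xk k w : R := n%:R * ((cnt_c g z k N w)%:R - (ch k N w)%:R) - ((cnt_a g k N w)%:R - (ah k N w)%:R).

Lemma Xk0 k w : (cnt_a g k N w < Aa)%N -> Xk k w = 0.
Proof.
move=> h; have [I1 I2] := inv_hat k w (leqnn N).
have hah : ah k N w = cnt_a g k N w by rewrite I1; apply/minn_idPl; exact: ltnW.
by rewrite /Xk hah I2 // !subrr mulr0 subrr.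
Qed.

Lemma Z_bound w : 0 < P w -> (\sum_k Xk k w) ^+ 2 <= 2 * Psi N w + 8 * Phi1 N w + 10 * Y ^+ 2.
Proof.
move=> Pw.
have Phi0 : forall k0, vh k0 N w ^+ 2 <= Phi1 N w.
  move=> k0; rewrite /Phi1 (bigD1 k0) //= lerDl; apply: sumr_ge0 => *; exact: sqr_ge0.
have Y0 := (Y_facts).1.
case: (pickP (fun k => (Aa <= cnt_a g k N w)%N)) => [k0 hk0 | hnone]; last first.
  rewrite big1 => [|k _]; last by apply: Xk0; rewrite ltnNge hnone.
  rewrite /Psi big1 => [|k _]; last by rewrite hnone.
  have : 0 <= Phi1 N w by apply: sumr_ge0 => *; exact: sqr_ge0.
  rewrite expr0n /=; nra.
have other : forall k, k != k0 -> (cnt_a g k N w < Aa)%N.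
  by move=> k hk; rewrite ltnNge; apply/negP => h; apply: (one_label hk h hk0).
rewrite (bigD1 k0) //= big1 ?addr0 => [|k hk]; last exact/Xk0/other.
rewrite /Psi (bigD1 k0) //= big1 ?addr0 => [|k hk]; last by rewrite leqNgt other.
rewrite hk0.
have hX : Xk k0 w = ev k0 N w - (vh k0 N w - Y) by rewrite /Xk /ev /vh /cr /ar; ring.
have := ev_end k0 Pw; have := Phi0 k0; rewrite hX.
set E := ev k0 N w; set V := vh k0 N w; set B := eb k0 N w.
have := sqr_ge0 (E + (V - Y)); have := sqr_ge0 (V + Y).
move=> *; nra.
Qed.

Lemma Exp_ge0 (X : Omega -> R) : (forall w, 0 <= X w) -> 0 <= Exp P X.
Proof. by move=> H; apply: sumr_ge0 => w _; rewrite mulr_ge0 // P0. Qed.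

Lemma final : `| Exp P (fun w => \sum_(i : 'I_N) (1 - wind R g i w) * ((z i w)%:R - n%:R^-1)) |
    <= 2 * Num.sqrt (6 * (\sum_(i : 'I_N) Exp P (fun w => (z i w)%:R)) + 8 * m%:R).
Proof.
set S := \sum_(i : 'I_N) Exp P (fun w => (z i w)%:R).
have S0 : 0 <= S by apply: sumr_ge0 => i _; apply: Exp_ge0 => w.
have [Y0 [Y2 Y6]] := Y_facts.
have nz : (n%:R : R) != 0 by rewrite pnatr_eq0 -lt0n.
have n0 : 0 < (n%:R : R) by rewrite ltr0n.
have hQ : forall w, \sum_(i : 'I_N) (1 - wind R g i w) * ((z i w)%:R - n%:R^-1) =
    n%:R^-1 * \sum_k Xk k w.
  move=> w; have := Q_ident w (leqnn N).
  have -> : \sum_(i : 'I_N | (i < N)%N) (1 - wind R g i w) * ((z i w)%:R - n%:R^-1) =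
     \sum_(i : 'I_N) (1 - wind R g i w) * ((z i w)%:R - n%:R^-1).
    by apply: eq_bigl => i; rewrite ltn_ord.
  move=> <-; by rewrite mulrA mulVf // mul1r.
rewrite (Exp_ext _ hQ) ExpZ.
set Z := Exp P (fun w => \sum_k Xk k w).
have hZ : Z ^+ 2 <= n%:R ^+ 2 * (10 * S + m%:R).
  apply: le_trans (CS _ HP) _.
  have H := @Exp_le _ _ P (fun w => (\sum_k Xk k w) ^+ 2)
     (fun w => 2 * Psi N w + 8 * Phi1 N w + 10 * Y ^+ 2) P0 (fun w Pw => Z_bound Pw).
  apply: le_trans H _.
  rewrite !ExpD !ExpZ ExpC //.
  have := Phi1_bound; have := Psi_bound; rewrite -/S => h1 h2.
  nra.
have hQ2 : (n%:R^-1 * Z) ^+ 2 <= 4 * (6 * S + 8 * m%:R).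
  rewrite exprMn.
  have : n%:R^-1 ^+ 2 * Z ^+ 2 <= n%:R^-1 ^+ 2 * (n%:R ^+ 2 * (10 * S + m%:R)).
    by rewrite ler_wpM2l ?sqr_ge0.
  have e : n%:R^-1 ^+ 2 * (n%:R ^+ 2 * (10 * S + m%:R)) = 10 * S + m%:R by field.
  rewrite e => h; apply: le_trans h _.
  have : (0 : R) <= m%:R by [].
  lra.
have s0 : 0 <= Num.sqrt (6 * S + 8 * m%:R) by rewrite sqrtr_ge0.
rewrite -(ler_sqr (R := R)) ?nnegrE ?normr_ge0 ?mulr_ge0 //.
rewrite real_normK ?num_real // [in X in _ <= X]exprMn sqr_sqrtr; last by have : (0 : R) <= m%:R by []; lra.
by apply: le_trans hQ2 _; rewrite expr2; lra.
Qed.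

End Main.

Theorem lemma2p3 (R : realType) (m n : nat)
  (Hm : (0 < m)%N) (Hn : (0 < n)%N)
  (Hnm : 1200 * Num.sqrt (m%:R : R) <= n%:R)
  (* finite probability space (already containing the extension carrying z) *)
  (Omega : finType) (P : Omega -> R) (HP : is_pmf P)
  (* the shuffled deck, uniform over all arrangements with m copies of each label *)
  (deck : Omega -> {ffun 'I_(m * n) -> 'I_n})
  (Hdeck : forall d, Pr P (fun w => deck w == d) =
     (if valid_deck d then (#|[pred d' : {ffun 'I_(m * n) -> 'I_n} | valid_deck d']|%:R)^-1 else 0))
  (* the guesser's private randomness, independent of the deck *)
  (S : finType) (xi : Omega -> S)
  (Hindep : forall d s, Pr P (fun w => (deck w == d) && (xi w == s)) =
     Pr P (fun w => deck w == d) * Pr P (fun w => xi w == s))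
  (* the fixed (randomized) strategy: guess in round t from y_1..y_{t-1} and the seed *)
  (strat : 'I_(m * n) -> seq bool -> S -> 'I_n)
  (g : 'I_(m * n) -> Omega -> 'I_n) (y z : 'I_(m * n) -> Omega -> bool)
  (Hg : forall t w, g t w = strat t (map (fun i : 'I_(m * n) => y i w) (filter (fun i : 'I_(m * n) => (i < t)%N) (enum 'I_(m * n)))) (xi w))
  (Hy : forall t w, y t w = (deck w t == g t w))
  (* (a) *)
  (Ha : forall w, 0 < P w -> forall (k : 'I_n) (t : nat), (t <= m * n)%N ->
     (m%:R - Num.max ((m * n)%:R - (cnt_a g k t w)%:R - (Ybound R m n)%:R) 0
        <= (cnt_c g z k t w)%:R :> R)
     /\ (cnt_c g z k t w <= m)%N)
  (* (b) *)
  (Hb : forall (t : 'I_(m * n)) w0, 0 < P w0 ->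
     forall (a : {ffun 'I_(m * n) -> bool}) w1,
     condPr P (fun w => [forall i : 'I_(m * n), (i <= t)%N ==> (z i w == a i)]
                        && (pre_le g (m * n) w == pre_le g (m * n) w1)
                        && (pre_le y (m * n) w == pre_le y (m * n) w1))
            (fun w => (pre_le g t w, pre_le y t w)) w0
     = (\prod_(i : 'I_(m * n) | (i <= t)%N)
          condPr P (fun w => z i w == a i) (fun w => (pre_le g t w, pre_le y t w)) w0)
       * condPr P (fun w => (pre_le g (m * n) w == pre_le g (m * n) w1)
                            && (pre_le y (m * n) w == pre_le y (m * n) w1))
            (fun w => (pre_le g t w, pre_le y t w)) w0)
  (* (c) *)
  (Hc : forall (t : 'I_(m * n)) w, 0 < P w ->
     (cnt_a g (g t w) t w)%:R < (m * n)%:R - (Ybound R m n)%:R :> R ->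
     condE P (fun w' => (z t w')%:R) (fun w' => (pre_le g t w', pre_lt z t w')) w
     = ((m%:R - (cnt_c g z (g t w) t w)%:R)
         / ((m * n)%:R - (cnt_a g (g t w) t w)%:R - (Ybound R m n)%:R)))
  (* (d) *)
  (Hd : forall (t : 'I_(m * n)) w, 0 < P w ->
     condE P (fun w' => (y t w')%:R) (fun w' => (pre_le g t w', pre_lt y t w')) w
       <= condE P (fun w' => (z t w')%:R) (fun w' => (pre_le g t w', pre_lt z t w')) w ->
     (y t w <= z t w)%N) :
  `| Exp P (fun w => \sum_(i : 'I_(m * n)) (1 - wind R g i w) * ((z i w)%:R - n%:R^-1)) |
    <= 2 * Num.sqrt (6 * (\sum_(i : 'I_(m * n)) Exp P (fun w => (z i w)%:R)) + 8 * m%:R).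
Proof.
exact: (final Hm Hn HP Ha Hc).
Qed.
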